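(* For every integer $d\ge 3$, the space $\mathcal O_d$ is homotopy equivalent to the $2$-sphere $S^2$.
   Context: A polynomial map is a map $\phi:\mathbb R\to\mathbb R^3$ whose three component functions are real polynomials. A polynomial knot is a polynomial map which is a smooth embedding, i.e. $\phi$ is injective and $\phi'(t)\neq 0$ for all $t\in\mathbb R$. For an integer $d\ge 2$, $\mathcal A_d$ denotes the set of polynomial maps $t\mapsto (f(t),g(t),h(t))$ with $\deg f\le d-2$, $\deg g\le d-1$, $\deg h\le d$ (the zero polynomial is allowed and has degree $-\infty$). Writing $f(t)=\sum_{i=0}^{d-2}a_it^i$, $g(t)=\sum_{i=0}^{d-1}b_it^i$, $h(t)=\sum_{i=0}^{d}c_it^i$, the map $\eta:\mathcal A_d\to\mathbb R^{3d}$, $(f,g,h)\mapsto(a_0,\dots,a_{d-2},b_0,\dots,b_{d-1},c_0,\dots,c_d)$ is a bijection; $\mathcal A_d$ carries the metric $\rho(\phi,\psi)=\|\eta(\phi)-\eta(\psi)\|$ (Euclidean norm), so that $\eta$ is a homeomorphism, and all subsets of $\mathcal A_d$ carry the subspace topology. $\mathcal O_d$ is the set of all polynomial knots belonging to $\mathcal A_d$. *)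

(* Defs.v *)
From Stdlib Require Import Reals Lra.
Open Scope R_scope.

(* Points of R^n are represented as coefficient sequences x : nat -> R;
   only the coordinates x 0, ..., x (n-1) matter (sets below also require
   the remaining coordinates to vanish). *)

Fixpoint psum (n : nat) (g : nat -> R) : R :=
  match n with
  | O => 0
  | S k => psum k g + g k
  end.

Definition edist (n : nat) (x y : nat -> R) : R :=
  sqrt (psum n (fun i => (x i - y i) ^ 2)).

Definition inRn (n : nat) (x : nat -> R) : Prop :=
  forall i, (n <= i)%nat -> x i = 0.

Definition cont_on (n m : nat) (S : (nat -> R) -> Prop)
  (f : (nat -> R) -> (nat -> R)) : Prop :=
  forall x, S x -> forall eps, 0 < eps -> exists delta, 0 < delta /\
    forall y, S y -> edist n x y < delta -> edist m (f x) (f y) < eps.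

Definition cont_on_I (n : nat) (S : (nat -> R) -> Prop)
  (H : R -> (nat -> R) -> (nat -> R)) : Prop :=
  forall t x, 0 <= t <= 1 -> S x -> forall eps, 0 < eps -> exists delta, 0 < delta /\
    forall s y, 0 <= s <= 1 -> S y -> Rabs (t - s) < delta -> edist n x y < delta ->
      edist n (H t x) (H s y) < eps.

Definition homotopic_on (n : nat) (S : (nat -> R) -> Prop)
  (u v : (nat -> R) -> (nat -> R)) : Prop :=
  exists H : R -> (nat -> R) -> (nat -> R),
    cont_on_I n S H /\
    (forall t x, 0 <= t <= 1 -> S x -> S (H t x)) /\
    (forall x, S x -> H 0 x = u x) /\
    (forall x, S x -> H 1 x = v x).

Definition homotopy_equivalent (n : nat) (S : (nat -> R) -> Prop)
  (m : nat) (T : (nat -> R) -> Prop) : Prop :=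
  exists (f g : (nat -> R) -> (nat -> R)),
    (forall x, S x -> T (f x)) /\ (forall y, T y -> S (g y)) /\
    cont_on n m S f /\ cont_on m n T g /\
    homotopic_on n S (fun x => g (f x)) (fun x => x) /\
    homotopic_on m T (fun y => f (g y)) (fun y => y).

Definition sphere2 (x : nat -> R) : Prop :=
  inRn 3 x /\ x 0%nat ^ 2 + x 1%nat ^ 2 + x 2%nat ^ 2 = 1.

(* The coordinate vector eta(phi) = (a_0..a_{d-2}, b_0..b_{d-1}, c_0..c_d) is c;
   the components of the polynomial map phi = (f,g,h) it encodes: *)
Definition compf (d : nat) (c : nat -> R) (t : R) : R :=
  psum (d - 1) (fun i => c i * t ^ i).
Definition compg (d : nat) (c : nat -> R) (t : R) : R :=
  psum d (fun i => c (d - 1 + i)%nat * t ^ i).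
Definition comph (d : nat) (c : nat -> R) (t : R) : R :=
  psum (d + 1) (fun i => c (2 * d - 1 + i)%nat * t ^ i).

Definition is_poly_knot (d : nat) (c : nat -> R) : Prop :=
  (forall s t, compf d c s = compf d c t -> compg d c s = compg d c t ->
               comph d c s = comph d c t -> s = t) /\
  (forall t l1 l2 l3,
     derivable_pt_lim (compf d c) t l1 ->
     derivable_pt_lim (compg d c) t l2 ->
     derivable_pt_lim (comph d c) t l3 ->
     ~ (l1 = 0 /\ l2 = 0 /\ l3 = 0)).

Definition O_d (d : nat) (c : nat -> R) : Prop :=
  inRn (3 * d) c /\ is_poly_knot d c.

(* Main.v *)
Require Import Defs.
From Stdlib Require Import Reals Lra Lia FunctionalExtensionality.
Open Scope R_scope.


Section Lim.
Variable T : Type.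
Variable D : T -> Prop.
Variable N : R -> T -> Prop.
Hypothesis Nmono : forall d1 d2 y, d1 <= d2 -> N d1 y -> N d2 y.

Definition Lim (F : T -> R) (a : R) : Prop :=
  forall eps, 0 < eps -> exists delta, 0 < delta /\
    forall y, D y -> N delta y -> Rabs (F y - a) < eps.

Lemma Lim_const c : Lim (fun _ => c) c.
Proof. intros e He; exists 1; split; [lra|]. intros; rewrite Rminus_diag, Rabs_R0; lra. Qed.

Lemma Lim_plus F G a b : Lim F a -> Lim G b -> Lim (fun y => F y + G y) (a + b).
Proof.
  intros HF HG e He.
  destruct (HF (e/2)) as [d1 [Hd1 H1]]; [lra|].
  destruct (HG (e/2)) as [d2 [Hd2 H2]]; [lra|].
  exists (Rmin d1 d2); split; [apply Rmin_pos; lra|].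
  intros y Dy Ny.
  specialize (H1 y Dy (Nmono _ _ _ (Rmin_l d1 d2) Ny)).
  specialize (H2 y Dy (Nmono _ _ _ (Rmin_r d1 d2) Ny)).
  replace (F y + G y - (a + b)) with ((F y - a) + (G y - b)) by ring.
  eapply Rle_lt_trans; [apply Rabs_triang|]. lra.
Qed.

Lemma Lim_mult F G a b : Lim F a -> Lim G b -> Lim (fun y => F y * G y) (a * b).
Proof.
  intros HF HG e He.
  set (K := 1 + Rabs a + Rabs b).
  assert (HK : 0 < K) by (unfold K; pose proof (Rabs_pos a); pose proof (Rabs_pos b); lra).
  set (e1 := Rmin 1 (e / (2 * K))).
  assert (He1 : 0 < e1) by (apply Rmin_pos; [lra| apply Rdiv_lt_0_compat; lra]).
  assert (He1a : e1 <= 1) by apply Rmin_l.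
  assert (He1b : e1 * K <= e / 2).
  { assert (e1 <= e / (2*K)) by apply Rmin_r.
    apply Rmult_le_compat_r with (r := K) in H; [|lra].
    replace (e / (2 * K) * K) with (e/2) in H by (field; lra). lra. }
  destruct (HF e1 He1) as [d1 [Hd1 H1]].
  destruct (HG e1 He1) as [d2 [Hd2 H2]].
  exists (Rmin d1 d2); split; [apply Rmin_pos; lra|].
  intros y Dy Ny.
  specialize (H1 y Dy (Nmono _ _ _ (Rmin_l d1 d2) Ny)).
  specialize (H2 y Dy (Nmono _ _ _ (Rmin_r d1 d2) Ny)).
  replace (F y * G y - a * b) with ((F y - a) * (G y - b) + a * (G y - b) + b * (F y - a)) by ring.
  eapply Rle_lt_trans; [apply Rabs_triang|].
  eapply Rle_lt_trans; [apply Rplus_le_compat_r; apply Rabs_triang|].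
  rewrite !Rabs_mult.
  pose proof (Rabs_pos a); pose proof (Rabs_pos b);
  pose proof (Rabs_pos (F y - a)); pose proof (Rabs_pos (G y - b)).
  assert (Rabs (F y - a) * Rabs (G y - b) <= e1 * e1) by (apply Rmult_le_compat; lra).
  assert (Rabs a * Rabs (G y - b) <= Rabs a * e1) by (apply Rmult_le_compat_l; lra).
  assert (Rabs b * Rabs (F y - a) <= Rabs b * e1) by (apply Rmult_le_compat_l; lra).
  assert (e1 * e1 <= e1) by (rewrite <- (Rmult_1_r e1) at 3; apply Rmult_le_compat_l; lra).
  unfold K in He1b. nra.
Qed.

Lemma Lim_comp F a h : Lim F a -> continuity_pt h a -> Lim (fun y => h (F y)) (h a).
Proof.
  intros HF Hh e He.
  destruct (Hh e He) as [al [Hal Hal2]].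
  destruct (HF al Hal) as [d [Hd H1]].
  exists d; split; auto. intros y Dy Ny.
  destruct (Req_dec (F y) a) as [E|E].
  - rewrite E, Rminus_diag, Rabs_R0; lra.
  - apply (Hal2 (F y)). split. split; [exact I| auto]. apply (H1 y Dy Ny).
Qed.

Lemma Lim_pow F a m : Lim F a -> Lim (fun y => F y ^ m) (a ^ m).
Proof.
  intros HF; induction m; simpl.
  - apply Lim_const.
  - apply Lim_mult; auto.
Qed.

Lemma Lim_inv F a : Lim F a -> a <> 0 -> Lim (fun y => / F y) (/ a).
Proof.
  intros HF Ha.
  apply (Lim_comp F a Rinv HF).
  apply (continuity_pt_inv (fun x => x)); auto.
  apply derivable_continuous_pt. apply derivable_pt_id.
Qed.

Lemma Lim_sqrt F a : Lim F a -> 0 <= a -> Lim (fun y => sqrt (F y)) (sqrt a).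
Proof. intros HF Ha. apply (Lim_comp F a sqrt HF). apply continuity_pt_sqrt; auto. Qed.

Lemma Lim_ext F G a : (forall y, F y = G y) -> Lim F a -> Lim G a.
Proof. intros E HF e He. destruct (HF e He) as [d [Hd H]]. exists d; split; auto.
  intros; rewrite <- E; auto. Qed.

Lemma Lim_vec (G : nat -> T -> R) (a : nat -> R) m :
  (forall i, (i < m)%nat -> Lim (G i) (a i)) -> forall e, 0 < e -> exists delta, 0 < delta /\
    forall y, D y -> N delta y -> forall i, (i < m)%nat -> Rabs (G i y - a i) < e.
Proof.
  induction m; intros HG e He.
  - exists 1; split; [lra|]. intros; lia.
  - destruct (IHm ltac:(intros; apply HG; lia) e He) as [d1 [Hd1 H1]].
    destruct (HG m (Nat.lt_succ_diag_r m) e He) as [d2 [Hd2 H2]].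
    exists (Rmin d1 d2); split; [apply Rmin_pos; lra|].
    intros y Dy Ny i Hi.
    destruct (Nat.eq_dec i m) as [->|Hne].
    + apply H2; auto. apply (Nmono _ _ _ (Rmin_r d1 d2) Ny).
    + apply H1; auto. apply (Nmono _ _ _ (Rmin_l d1 d2) Ny). lia.
Qed.
End Lim.

Lemma psum_ext n g h : (forall i, (i < n)%nat -> g i = h i) -> psum n g = psum n h.
Proof. induction n; simpl; intros; auto. rewrite IHn, H; auto. Qed.

Lemma psum_le n g h : (forall i, (i < n)%nat -> g i <= h i) -> psum n g <= psum n h.
Proof. induction n; simpl; intros; [lra|]. pose proof (H n ltac:(lia)).
  pose proof (IHn ltac:(intros; apply H; lia)). lra. Qed.

Lemma psum_nonneg n g : (forall i, (i < n)%nat -> 0 <= g i) -> 0 <= psum n g.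
Proof. intros. replace 0 with (psum n (fun _ => 0)). apply psum_le; auto.
  induction n; simpl; auto. rewrite IHn; [ring| intros; apply H; lia]. Qed.

Lemma psum_const n c : psum n (fun _ => c) = INR n * c.
Proof. induction n; simpl psum; [simpl; ring|]. rewrite IHn, S_INR. ring. Qed.

Lemma psum_term n g i : (forall j, (j < n)%nat -> 0 <= g j) -> (i < n)%nat -> g i <= psum n g.
Proof. induction n; intros; [lia|]. simpl.
  assert (0 <= psum n g) by (apply psum_nonneg; intros; apply H; lia).
  destruct (Nat.eq_dec i n) as [->|]. lra.
  pose proof (IHn ltac:(intros; apply H; lia) ltac:(lia)). pose proof (H n ltac:(lia)). lra. Qed.

Lemma edist_coord n x y i : (i < n)%nat -> Rabs (x i - y i) <= edist n x y.
Proof.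
  intros Hi. unfold edist.
  rewrite <- sqrt_Rsqr_abs. apply sqrt_le_1_alt.
  unfold Rsqr. replace ((x i - y i) * (x i - y i)) with ((fun j => (x j - y j)^2) i) by (simpl; ring).
  apply (psum_term n (fun j => (x j - y j)^2) i); auto. intros; apply pow2_ge_0.
Qed.

Lemma edist_bound m u v e : 0 < e -> (forall i, (i < m)%nat -> Rabs (u i - v i) < e) ->
  edist m u v <= INR m * e.
Proof.
  intros He H. unfold edist.
  rewrite <- (sqrt_pow2 (INR m * e)).
  2:{ apply Rmult_le_pos; [apply pos_INR| lra]. }
  apply sqrt_le_1_alt.
  apply Rle_trans with (psum m (fun _ => e ^ 2)).
  - apply psum_le. intros i Hi. specialize (H i Hi).
    pose proof (Rabs_pos (u i - v i)).
    replace ((u i - v i)^2) with (Rabs (u i - v i) ^2).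
    + nra.
    + rewrite RPow_abs. apply Rabs_right. apply Rle_ge, pow2_ge_0.
  - rewrite psum_const. destruct m. simpl; lra.
    assert (1 <= INR (S m)) by (rewrite S_INR; pose proof (pos_INR m); lra).
    set (k := INR (S m)) in *.
    assert (0 <= e^2) by apply pow2_ge_0.
    replace ((k * e)^2) with (k * (k * e^2)) by ring.
    assert (k * e^2 <= k * (k * e^2)) by (rewrite <- (Rmult_1_l (k*e^2)) at 1; apply Rmult_le_compat_r; nra).
    lra.
Qed.

Lemma cont_on_coords n m S f :
  (forall x, S x -> forall i, (i < m)%nat ->
     Lim (nat -> R) S (fun d y => edist n x y < d) (fun y => f y i) (f x i)) ->
  cont_on n m S f.
Proof.
  intros H x Sx eps Heps.
  set (e := eps / (INR m + 1)).
  assert (He : 0 < e) by (unfold e; apply Rdiv_lt_0_compat; [lra| pose proof (pos_INR m); lra]).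
  destruct (Lim_vec (nat -> R) S (fun d y => edist n x y < d) ltac:(intros; lra)
     (fun i y => f y i) (fun i => f x i) m (H x Sx) e He) as [d [Hd Hv]].
  exists d; split; auto. intros y Sy Hy.
  eapply Rle_lt_trans. apply (edist_bound m _ _ e He).
  intros i Hi. rewrite Rabs_minus_sym. apply (Hv y Sy Hy i Hi).
  unfold e. pose proof (pos_INR m).
  replace (INR m * (eps / (INR m + 1))) with (eps * (INR m / (INR m + 1))) by (field; lra).
  assert (INR m / (INR m + 1) < 1) by (apply (Rmult_lt_reg_r (INR m + 1)); [lra|]; unfold Rdiv; rewrite Rmult_assoc, Rinv_l; lra). nra.
Qed.

Lemma cont_on_I_coords n S H :
  (forall t x, 0 <= t <= 1 -> S x -> forall i, (i < n)%nat ->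
     Lim (R * (nat -> R)) (fun p => 0 <= fst p <= 1 /\ S (snd p))
       (fun d p => Rabs (t - fst p) < d /\ edist n x (snd p) < d)
       (fun p => H (fst p) (snd p) i) (H t x i)) ->
  cont_on_I n S H.
Proof.
  intros HH t x Ht Sx eps Heps.
  set (e := eps / (INR n + 1)).
  assert (He : 0 < e) by (unfold e; apply Rdiv_lt_0_compat; [lra| pose proof (pos_INR n); lra]).
  destruct (Lim_vec (R * (nat -> R)) (fun p => 0 <= fst p <= 1 /\ S (snd p))
       (fun d p => Rabs (t - fst p) < d /\ edist n x (snd p) < d) ltac:(intros; lra)
     (fun i p => H (fst p) (snd p) i) (fun i => H t x i) n (HH t x Ht Sx) e He) as [d [Hd Hv]].
  exists d; split; auto. intros s y Hs Sy Hts Hy.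
  eapply Rle_lt_trans. apply (edist_bound n _ _ e He).
  intros i Hi. rewrite Rabs_minus_sym. apply (Hv (s, y) (conj Hs Sy) (conj Hts Hy) i Hi).
  unfold e. pose proof (pos_INR n).
  replace (INR n * (eps / (INR n + 1))) with (eps * (INR n / (INR n + 1))) by (field; lra).
  assert (INR n / (INR n + 1) < 1) by (apply (Rmult_lt_reg_r (INR n + 1)); [lra|]; unfold Rdiv; rewrite Rmult_assoc, Rinv_l; lra). nra.
Qed.

Lemma Lim_coord n x S i : (i < n)%nat ->
  Lim (nat -> R) S (fun d y => edist n x y < d) (fun y => y i) (x i).
Proof. intros Hi e He. exists e; split; auto. intros y _ Hy.
  rewrite Rabs_minus_sym. eapply Rle_lt_trans; [apply edist_coord; eauto| auto]. Qed.

Lemma Lim_coordI n t x S i : (i < n)%nat ->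
  Lim (R * (nat -> R)) S (fun d p => Rabs (t - fst p) < d /\ edist n x (snd p) < d)
     (fun p => snd p i) (x i).
Proof. intros Hi e He. exists e; split; auto. intros y _ [_ Hy].
  rewrite Rabs_minus_sym. eapply Rle_lt_trans; [apply edist_coord; eauto| auto]. Qed.

Lemma Lim_fstI n t x S :
  Lim (R * (nat -> R)) S (fun d p => Rabs (t - fst p) < d /\ edist n x (snd p) < d)
     (fun p => fst p) t.
Proof. intros e He. exists e; split; auto. intros y _ [Hy _].
  rewrite Rabs_minus_sym. auto. Qed.

Definition P (n : nat) (a : nat -> R) (t : R) : R := psum n (fun i => a i * t ^ i).

Lemma dpl_ext f g x l : (forall y, f y = g y) -> derivable_pt_lim f x l -> derivable_pt_lim g x l.
Proof. intros E H. replace g with f; auto. apply functional_extensionality; auto. Qed.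

Lemma P_deriv n a t : derivable_pt_lim (P n a) t (psum n (fun i => a i * (INR i * t ^ pred i))).
Proof.
  induction n.
  - simpl. apply (dpl_ext (fct_cte 0)). intros; reflexivity. apply derivable_pt_lim_const.
  - simpl psum. apply (dpl_ext (P n a + (fct_cte (a n) * (fun y => y ^ n)))%F).
    + intros y. unfold P. simpl. reflexivity.
    + apply derivable_pt_lim_plus; auto.
      apply (dpl_ext _ _ _ _ (fun y => eq_refl)) in IHn.
      replace (a n * (INR n * t ^ pred n)) with (0 * (t ^ n) + a n * (INR n * t ^ pred n)) by ring.
      apply derivable_pt_lim_mult. apply derivable_pt_lim_const. apply derivable_pt_lim_pow.
Qed.

Lemma psum_only1 n g : (2 <= n)%nat -> (forall i, i <> 1%nat -> g i = 0) -> psum n g = g 1%nat.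
Proof.
  intros Hn Hg. induction n; [lia|].
  destruct (Nat.eq_dec n 1) as [->|Hne].
  - simpl. rewrite (Hg 0%nat) by lia. ring.
  - simpl. rewrite IHn by lia. rewrite (Hg n) by lia. ring.
Qed.

Lemma P_deriv0 n a : (2 <= n)%nat -> derivable_pt_lim (P n a) 0 (a 1%nat).
Proof.
  intros Hn. pose proof (P_deriv n a 0).
  rewrite psum_only1 in H; auto.
  - simpl in H. replace (a 1%nat) with (a 1%nat * (1 * 1)) by ring. exact H.
  - intros i Hi. destruct i. simpl. ring. destruct i. lia. simpl. ring.
Qed.

Lemma P_line n a t : (2 <= n)%nat -> (forall i, (i < n)%nat -> i <> 1%nat -> a i = 0) ->
  P n a t = a 1%nat * t.
Proof.
  intros Hn Ha. unfold P.
  rewrite (psum_ext n _ (fun i => if Nat.eq_dec i 1 then a 1%nat * t else 0)).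
  - rewrite psum_only1; auto. intros i Hi; destruct Nat.eq_dec; tauto.
  - intros i Hi. destruct Nat.eq_dec. subst; simpl; ring. rewrite Ha; auto. ring.
Qed.

Definition wt (t m : R) (j : nat) : R := match j with O => t | S k => m * t ^ k end.

Lemma P_scaled n a t m tau : t <> 0 ->
  P (S n) (fun i => wt t m i * a i) tau = t * a 0%nat + (m / t) * (P (S n) a (t * tau) - a 0%nat).
Proof.
  intros Ht. induction n.
  - unfold P; simpl. field; auto.
  - unfold P in *. simpl psum in *. rewrite IHn. simpl wt.
    rewrite Rpow_mult_distr. simpl. field; auto.
Qed.

Lemma compf_P d c : compf d c = P (d - 1) c.
Proof. reflexivity. Qed.
Lemma compg_P d c : compg d c = P d (fun i => c (d - 1 + i)%nat).
Proof. reflexivity. Qed.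
Lemma comph_P d c : comph d c = P (d + 1) (fun i => c (2 * d - 1 + i)%nat).
Proof. reflexivity. Qed.

Definition S3 (d : nat) (c : nat -> R) : R := c 1%nat ^ 2 + c d ^ 2 + c (2 * d)%nat ^ 2.
Definition Nrm (d : nat) (c : nat -> R) : R := sqrt (S3 d c).

Lemma knot_pos d c : (3 <= d)%nat -> is_poly_knot d c -> 0 < S3 d c.
Proof.
  intros Hd [_ Hk]. unfold S3.
  destruct (Rle_lt_dec (c 1%nat ^ 2 + c d ^ 2 + c (2 * d)%nat ^ 2) 0) as [Hle|]; auto.
  exfalso. apply (Hk 0 (c 1%nat) (c d) (c (2*d)%nat)).
  - rewrite compf_P. apply P_deriv0. lia.
  - rewrite compg_P. pose proof (P_deriv0 d (fun i => c (d-1+i)%nat) ltac:(lia)) as H.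
    cbv beta in H. replace (d-1+1)%nat with d in H by lia. exact H.
  - rewrite comph_P. pose proof (P_deriv0 (d+1) (fun i => c (2*d-1+i)%nat) ltac:(lia)) as H.
    cbv beta in H. replace (2*d-1+1)%nat with (2*d)%nat in H by lia. exact H.
  - pose proof (pow2_ge_0 (c 1%nat)); pose proof (pow2_ge_0 (c d)); pose proof (pow2_ge_0 (c (2*d)%nat)).
    repeat split; nra.
Qed.

Lemma deriv_lin a t : derivable_pt_lim (fun x => a * x) t a.
Proof.
  apply (dpl_ext (fct_cte a * id)%F). intros; reflexivity.
  replace a with (0 * id t + fct_cte a t * 1) at 2 by (unfold fct_cte; ring).
  apply derivable_pt_lim_mult. apply derivable_pt_lim_const. apply derivable_pt_lim_id.
Qed.

Lemma line_knot d c a b e : (forall t, compf d c t = a * t) -> (forall t, compg d c t = b * t) ->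
  (forall t, comph d c t = e * t) -> 0 < a ^ 2 + b ^ 2 + e ^ 2 -> is_poly_knot d c.
Proof.
  intros Hf Hg Hh Hp. split.
  - intros s t E1 E2 E3. rewrite Hf, Hf in E1. rewrite Hg, Hg in E2. rewrite Hh, Hh in E3.
    destruct (Req_dec s t) as [|Hne]; auto. exfalso.
    assert (s - t <> 0) by lra.
    assert (a = 0) by (apply (Rmult_eq_reg_r (s - t)); auto; lra).
    assert (b = 0) by (apply (Rmult_eq_reg_r (s - t)); auto; lra).
    assert (e = 0) by (apply (Rmult_eq_reg_r (s - t)); auto; lra).
    subst. lra.
  - intros t l1 l2 l3 D1 D2 D3 [Z1 [Z2 Z3]].
    assert (l1 = a) by (apply (uniqueness_limite (compf d c) t); auto; apply (dpl_ext (fun x => a * x)); auto; apply deriv_lin).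
    assert (l2 = b) by (apply (uniqueness_limite (compg d c) t); auto; apply (dpl_ext (fun x => b * x)); auto; apply deriv_lin).
    assert (l3 = e) by (apply (uniqueness_limite (comph d c) t); auto; apply (dpl_ext (fun x => e * x)); auto; apply deriv_lin).
    subst. lra.
Qed.

Lemma deriv_scaled F t k A B tau L : derivable_pt_lim F (t * tau) L ->
  derivable_pt_lim (fun x => A + k * (F (t * x) - B)) tau (k * (L * t)).
Proof.
  intros HF.
  assert (H1 : derivable_pt_lim (comp F (fun x => t * x)) tau (L * t)).
  { apply derivable_pt_lim_comp; auto. apply deriv_lin. }
  set (G := comp F (fun x => t * x)) in *.
  apply (dpl_ext (fct_cte A + fct_cte k * (G - fct_cte B))%F).
  - intros; reflexivity.
  - replace (k * (L * t)) with (0 + (0 * (G - fct_cte B)%F tau + fct_cte k tau * (L * t - 0))) by (unfold fct_cte; ring).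
    apply derivable_pt_lim_plus. apply derivable_pt_lim_const.
    apply derivable_pt_lim_mult. apply derivable_pt_lim_const.
    apply derivable_pt_lim_minus; auto. apply derivable_pt_lim_const.
Qed.

Lemma scaled_knot d c c' t k : is_poly_knot d c -> t <> 0 -> k <> 0 ->
  (forall x, compf d c' x = t * compf d c 0 + k * (compf d c (t * x) - compf d c 0)) ->
  (forall x, compg d c' x = t * compg d c 0 + k * (compg d c (t * x) - compg d c 0)) ->
  (forall x, comph d c' x = t * comph d c 0 + k * (comph d c (t * x) - comph d c 0)) ->
  is_poly_knot d c'.
Proof.
  intros [Hi Hk] Ht Hk0 Ef Eg Eh. split.
  - intros s u E1 E2 E3. rewrite Ef, Ef in E1. rewrite Eg, Eg in E2. rewrite Eh, Eh in E3.
    assert (t * s = t * u).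
    { apply Hi.
      - apply (Rmult_eq_reg_l k); auto; lra.
      - apply (Rmult_eq_reg_l k); auto; lra.
      - apply (Rmult_eq_reg_l k); auto; lra. }
    apply (Rmult_eq_reg_l t); auto.
  - intros x l1 l2 l3 D1 D2 D3 [Z1 [Z2 Z3]].
    pose proof (P_deriv (d - 1) c (t * x)) as F1.
    pose proof (P_deriv d (fun i => c (d - 1 + i)%nat) (t * x)) as F2.
    pose proof (P_deriv (d + 1) (fun i => c (2 * d - 1 + i)%nat) (t * x)) as F3.
    set (L1 := psum (d - 1) _) in F1. set (L2 := psum d _) in F2. set (L3 := psum (d + 1) _) in F3.
    assert (l1 = k * (L1 * t)).
    { apply (uniqueness_limite (compf d c') x); auto. apply (dpl_ext (fun x => t * compf d c 0 + k * (compf d c (t * x) - compf d c 0))); auto.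
      apply deriv_scaled. exact F1. }
    assert (l2 = k * (L2 * t)).
    { apply (uniqueness_limite (compg d c') x); auto. apply (dpl_ext (fun x => t * compg d c 0 + k * (compg d c (t * x) - compg d c 0))); auto.
      apply deriv_scaled. exact F2. }
    assert (l3 = k * (L3 * t)).
    { apply (uniqueness_limite (comph d c') x); auto. apply (dpl_ext (fun x => t * comph d c 0 + k * (comph d c (t * x) - comph d c 0))); auto.
      apply deriv_scaled. exact F3. }
    apply (Hk (t * x) L1 L2 L3 F1 F2 F3).
    assert (Y1 : k * (L1 * t) = 0) by congruence.
    assert (Y2 : k * (L2 * t) = 0) by congruence.
    assert (Y3 : k * (L3 * t) = 0) by congruence.
    clear Z1 Z2 Z3. rename Y1 into Z1, Y2 into Z2, Y3 into Z3. repeat split.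
    + destruct (Rmult_integral _ _ Z1) as [|Z]; [contradiction|]. destruct (Rmult_integral _ _ Z); auto; contradiction.
    + destruct (Rmult_integral _ _ Z2) as [|Z]; [contradiction|]. destruct (Rmult_integral _ _ Z); auto; contradiction.
    + destruct (Rmult_integral _ _ Z3) as [|Z]; [contradiction|]. destruct (Rmult_integral _ _ Z); auto; contradiction.
Qed.

Definition fmap (d : nat) (c : nat -> R) : nat -> R := fun i =>
  match i with
  | O => c 1%nat / Nrm d c
  | 1%nat => c d / Nrm d c
  | 2%nat => c (2 * d)%nat / Nrm d c
  | _ => 0 end.

Definition gmap (d : nat) (y : nat -> R) : nat -> R := fun k =>
  if Nat.eqb k 1 then y 0%nat else if Nat.eqb k d then y 1%nat
  else if Nat.eqb k (2 * d) then y 2%nat else 0.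

Lemma fmap_sphere d c : (3 <= d)%nat -> O_d d c -> sphere2 (fmap d c).
Proof.
  intros Hd [_ Hk]. pose proof (knot_pos d c Hd Hk) as Hp. split.
  - intros i Hi. destruct i as [|[|[|i]]]; try lia. reflexivity.
  - simpl fmap. unfold Nrm.
    assert (Hs : sqrt (S3 d c) <> 0) by (apply Rgt_not_eq, sqrt_lt_R0; auto).
    pose proof (pow2_sqrt (S3 d c) ltac:(lra)) as E.
    unfold Rdiv. rewrite !Rpow_mult_distr, pow_inv.
    change (d + (d + 0))%nat with (2*d)%nat.
    unfold S3 in E |- *. rewrite E. field. unfold S3 in Hp. lra.
Qed.

Ltac nat_cases := repeat match goal with
  | |- context [Nat.eqb ?a ?b] => destruct (Nat.eqb_spec a b)
  | |- context [Nat.ltb ?a ?b] => destruct (Nat.ltb_spec a b)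
  end.

Lemma gmap_Od d y : (3 <= d)%nat -> sphere2 y -> O_d d (gmap d y).
Proof.
  intros Hd [Hy3 Hy]. split.
  - intros k Hk. unfold gmap. nat_cases; try lia; reflexivity.
  - apply (line_knot d _ (y 0%nat) (y 1%nat) (y 2%nat)); try lra.
    + intros t. rewrite compf_P. rewrite P_line by (try lia; intros i Hi Hi1; unfold gmap; nat_cases; lia || reflexivity).
      unfold gmap; nat_cases; try lia; reflexivity.
    + intros t. rewrite compg_P. rewrite P_line by (try lia; intros i Hi Hi1; unfold gmap; nat_cases; lia || reflexivity).
      unfold gmap; nat_cases; try lia; reflexivity.
    + intros t. rewrite comph_P. rewrite P_line by (try lia; intros i Hi Hi1; unfold gmap; nat_cases; lia || reflexivity).
      unfold gmap; nat_cases; try lia; reflexivity.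
Qed.

Lemma fg_id d y : (3 <= d)%nat -> sphere2 y -> fmap d (gmap d y) = y.
Proof.
  intros Hd [Hy3 Hy]. 
  assert (E : Nrm d (gmap d y) = 1).
  { unfold Nrm, S3, gmap. nat_cases; try lia. rewrite <- sqrt_1. f_equal. lra. }
  apply functional_extensionality. intros i.
  destruct i as [|[|[|i]]]; simpl fmap; rewrite ?E; unfold gmap; nat_cases; try lia;
    try (field_simplify; reflexivity).
  rewrite Hy3; auto. lia.
Qed.

Definition deg (d k : nat) : nat :=
  if Nat.ltb k (d - 1) then k else if Nat.ltb k (2 * d - 1) then (k - (d - 1))%nat
  else (k - (2 * d - 1))%nat.

Definition mu (d : nat) (t : R) (c : nat -> R) : R := (1 - t) / Nrm d c + t.

Definition Hmap (d : nat) (t : R) (c : nat -> R) : nat -> R :=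
  fun k => wt t (mu d t c) (deg d k) * c k.

Lemma P_at0 n a : P (S n) a 0 = a 0%nat.
Proof. induction n; unfold P in *; simpl psum in *. simpl; ring. rewrite IHn. simpl. ring. Qed.

Lemma P_at0' n a : (1 <= n)%nat -> P n a 0 = a 0%nat.
Proof. intros; destruct n; [lia| apply P_at0]. Qed.

Lemma Hf d t c tau : (3 <= d)%nat ->
  compf d (Hmap d t c) tau = P (S (d - 2)) (fun i => wt t (mu d t c) i * c i) tau.
Proof.
  intros Hd. rewrite compf_P. replace (d - 1)%nat with (S (d - 2)) by lia. unfold P.
  apply psum_ext. intros i Hi. unfold Hmap. f_equal. f_equal. f_equal.
  unfold deg. nat_cases; lia.
Qed.

Lemma Hg d t c tau : (3 <= d)%nat ->
  compg d (Hmap d t c) tau = P (S (d - 1)) (fun i => wt t (mu d t c) i * c (d - 1 + i)%nat) tau.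
Proof.
  intros Hd. rewrite compg_P. replace d with (S (d - 1)) at 1 by lia. unfold P.
  apply psum_ext. intros i Hi. unfold Hmap. f_equal. f_equal. f_equal.
  unfold deg. nat_cases; lia.
Qed.

Lemma Hh d t c tau : (3 <= d)%nat ->
  comph d (Hmap d t c) tau = P (S d) (fun i => wt t (mu d t c) i * c (2 * d - 1 + i)%nat) tau.
Proof.
  intros Hd. rewrite comph_P. replace (d + 1)%nat with (S d) by lia. unfold P.
  apply psum_ext. intros i Hi. unfold Hmap. f_equal. f_equal. f_equal.
  unfold deg. nat_cases; lia.
Qed.

Lemma Nrm_pos d c : (3 <= d)%nat -> O_d d c -> 0 < Nrm d c.
Proof. intros Hd [_ Hk]. apply sqrt_lt_R0, knot_pos; auto. Qed.

Lemma mu_pos d t c : (3 <= d)%nat -> O_d d c -> 0 <= t <= 1 -> 0 < mu d t c.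
Proof.
  intros Hd Hc Ht. pose proof (Nrm_pos d c Hd Hc). unfold mu.
  destruct (Req_dec t 0). subst. unfold Rdiv. rewrite Rminus_0_r, Rmult_1_l, Rplus_0_r.
  apply Rinv_0_lt_compat; auto.
  assert (0 <= (1 - t) / Nrm d c) by (unfold Rdiv; apply Rmult_le_pos; [lra| left; apply Rinv_0_lt_compat; auto]). lra.
Qed.

Lemma deg_cases d k : (3 <= d)%nat -> (k < 3 * d)%nat ->
  (deg d k = 0%nat /\ k <> 1%nat /\ k <> d /\ k <> (2 * d)%nat) \/
  (deg d k = 1%nat /\ (k = 1%nat \/ k = d \/ k = (2 * d)%nat)) \/
  (exists j, deg d k = S (S j) /\ k <> 1%nat /\ k <> d /\ k <> (2 * d)%nat).
Proof.
  intros Hd Hk. unfold deg. nat_cases.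
  - destruct k as [|[|j]]. left; lia. right; left; lia. right; right; exists j; lia.
  - destruct (k - (d - 1))%nat as [|[|j]] eqn:E. left; lia. right; left; lia. right; right; exists j; lia.
  - destruct (k - (2 * d - 1))%nat as [|[|j]] eqn:E. left; lia. right; left; lia. right; right; exists j; lia.
Qed.

Lemma Hmap0 d c : (3 <= d)%nat -> O_d d c -> Hmap d 0 c = gmap d (fmap d c).
Proof.
  intros Hd Hc. pose proof (Nrm_pos d c Hd Hc). destruct Hc as [Hc3 _].
  apply functional_extensionality. intros k. unfold Hmap, gmap.
  assert (Hm : mu d 0 c = / Nrm d c) by (unfold mu; field; lra).
  rewrite Hm.
  destruct (Nat.lt_ge_cases k (3 * d)) as [Hk|Hk].
  2:{ rewrite Hc3 by lia. nat_cases; try lia. ring. }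
  destruct (deg_cases d k Hd Hk) as [[E [H1 [H2 H3]]]|[[E HH]|[j [E [H1 [H2 H3]]]]]]; rewrite E.
  - nat_cases; try lia. simpl; ring.
  - destruct HH as [ -> | [ -> | -> ] ]; nat_cases; try lia; simpl wt; simpl fmap;
      try change (d + (d + 0))%nat with (2 * d)%nat; unfold Rdiv; ring.
  - nat_cases; try lia. simpl; ring.
Qed.

Lemma Hmap1 d c : Hmap d 1 c = c.
Proof.
  apply functional_extensionality. intros k. unfold Hmap.
  assert (mu d 1 c = 1) by (unfold mu; unfold Rdiv; ring).
  rewrite H. destruct (deg d k); simpl wt; rewrite ?pow1; ring.
Qed.

Lemma Hmap_Od d t c : (3 <= d)%nat -> O_d d c -> 0 <= t <= 1 -> O_d d (Hmap d t c).
Proof.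
  intros Hd Hc Ht. destruct (Req_dec t 0) as [->|Ht0].
  - rewrite Hmap0 by auto. apply gmap_Od; auto. apply fmap_sphere; auto.
  - pose proof (mu_pos d t c Hd Hc Ht). destruct Hc as [Hc3 Hk]. split.
    + intros k Hk'. unfold Hmap. rewrite Hc3; auto. ring.
    + apply (scaled_knot d c _ t (mu d t c / t)); auto.
      * unfold Rdiv. apply Rmult_integral_contrapositive. split; [lra| apply Rinv_neq_0_compat; auto].
      * intros x. rewrite Hf, P_scaled by auto. rewrite compf_P, (P_at0' (d - 1)) by lia.
        replace (d - 1)%nat with (S (d - 2)) by lia. reflexivity.
      * intros x. rewrite Hg, P_scaled by auto. rewrite compg_P, (P_at0' d) by lia.
        replace (S (d - 1)) with d by lia. reflexivity.
      * intros x. rewrite Hh, P_scaled by auto. rewrite comph_P, (P_at0' (d + 1)) by lia.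
        replace (d + 1)%nat with (S d) by lia. reflexivity.
Qed.

Lemma Lim_invNrm T Dm N (Nmono : forall d1 d2 y, d1 <= d2 -> N d1 y -> N d2 y)
  (Y : T -> nat -> R) x d : (3 <= d)%nat ->
  (forall i, (i < 3 * d)%nat -> Lim T Dm N (fun p => Y p i) (x i)) -> 0 < S3 d x ->
  Lim T Dm N (fun p => / Nrm d (Y p)) (/ Nrm d x).
Proof.
  intros Hd HY Hp. unfold Nrm.
  apply (Lim_inv T Dm N (fun p => sqrt (S3 d (Y p)))).
  - apply (Lim_sqrt T Dm N (fun p => S3 d (Y p))); [|lra]. unfold S3.
    repeat apply (Lim_plus T Dm N Nmono); apply (Lim_pow T Dm N Nmono); apply HY; lia.
  - apply Rgt_not_eq, sqrt_lt_R0; auto.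
Qed.

Lemma cont_f d : (3 <= d)%nat -> cont_on (3 * d) 3 (O_d d) (fmap d).
Proof.
  intros Hd. apply cont_on_coords. intros x Hx i Hi.
  assert (Nm : forall d1 d2 (y : nat -> R), d1 <= d2 -> edist (3 * d) x y < d1 -> edist (3 * d) x y < d2)
    by (intros; lra).
  assert (Hp : 0 < S3 d x) by (apply knot_pos; auto; apply Hx).
  assert (HI := Lim_invNrm _ (O_d d) _ Nm (fun y => y) x d Hd (fun i Hi => Lim_coord _ x _ i Hi) Hp).
  destruct i as [|[|[|i]]]; try lia; simpl fmap; unfold Rdiv;
    apply (Lim_mult _ _ _ Nm); auto; apply Lim_coord; lia.
Qed.

Lemma cont_g d : (3 <= d)%nat -> cont_on 3 (3 * d) sphere2 (gmap d).
Proof.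
  intros Hd. apply cont_on_coords. intros x Hx k Hk. unfold gmap.
  nat_cases; try apply Lim_const; apply Lim_coord; lia.
Qed.

Lemma cont_H d : (3 <= d)%nat -> cont_on_I (3 * d) (O_d d) (Hmap d).
Proof.
  intros Hd. apply cont_on_I_coords. intros t x Ht Hx k Hk.
  set (N := fun (dl : R) (p : R * (nat -> R)) => Rabs (t - fst p) < dl /\ edist (3 * d) x (snd p) < dl).
  assert (Nm : forall d1 d2 y, d1 <= d2 -> N d1 y -> N d2 y)
    by (unfold N; intros d1 d2 y H [H1 H2]; split; lra).
  assert (Hp : 0 < S3 d x) by (apply knot_pos; auto; apply Hx).
  set (Dm := fun p : R * (nat -> R) => 0 <= fst p <= 1 /\ O_d d (snd p)).
  assert (HI := Lim_invNrm _ Dm _ Nm (fun p => snd p) x d Hd (fun i Hi => Lim_coordI _ t x _ i Hi) Hp).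
  assert (Hc : Lim _ Dm N (fun p => snd p k) (x k)) by (apply Lim_coordI; auto).
  assert (Ht' : Lim _ Dm N (fun p => fst p) t) by apply Lim_fstI.
  assert (Hmu : Lim _ Dm N (fun p => mu d (fst p) (snd p)) (mu d t x)).
  { unfold mu, Rdiv. apply (Lim_plus _ _ _ Nm); auto. apply (Lim_mult _ _ _ Nm); auto.
    apply (Lim_ext _ _ _ (fun p => 1 + (-1) * fst p)). intros; ring.
    replace (1 - t) with (1 + (-1) * t) by ring.
    apply (Lim_plus _ _ _ Nm). apply Lim_const. apply (Lim_mult _ _ _ Nm); auto. apply Lim_const. }
  unfold Hmap. apply (Lim_mult _ _ _ Nm); auto.
  destruct (deg d k) as [|j]; simpl wt; auto.
  apply (Lim_mult _ _ _ Nm); auto. apply (Lim_pow _ _ _ Nm); auto.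
Qed.

Theorem mainTheorem1 : forall d : nat, (3 <= d)%nat ->
  homotopy_equivalent (3 * d) (O_d d) 3 sphere2.
Proof.
  intros d Hd. exists (fmap d), (gmap d).
  split; [intros; apply fmap_sphere; auto|].
  split; [intros; apply gmap_Od; auto|].
  split; [apply cont_f; auto|].
  split; [apply cont_g; auto|].
  split.
  - exists (Hmap d). split; [apply cont_H; auto|].
    split; [intros; apply Hmap_Od; auto|].
    split; [intros; apply Hmap0; auto|].
    intros; apply Hmap1.
  - exists (fun _ y => y). split.
    + intros t x Ht Sx eps Heps. exists eps; split; auto.
    + split; auto. split; auto. intros; symmetry; apply fg_id; auto.
Qed.
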